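(* Let $(\underline{\mathbf{r}},\overline{\mathbf{r}},\mathbf{c},\mathbf{c})$ be a realizable four-tuple of integer vectors with $\underline{\mathbf{r}}$ (length $n_1$) and $\mathbf{c}$ (length $n_2$) non-increasing and $\underline{\mathbf{r}}\le\overline{\mathbf{r}}$. Run the procedure Phase Two described in the context, and let $\mathbf{r}^{(k)}$ and $\overline{\mathbf{r}}^{(k)}$ be the states of $\mathbf{r}$ and $\overline{\mathbf{r}}$ after exactly $k$ iterations of its outer loop. Then $(\mathbf{r}^{(k)},\mathbf{r}^{(k)},\mathbf{c},\mathbf{c})$ is realizable if and only if $k=\delta_2=\Sigma_{n_2}\mathbf{c}-\Sigma_{n_1}\underline{\mathbf{r}}$.
   Context: Inequalities between vectors are componentwise. A four-tuple $(\underline{\mathbf{r}},\overline{\mathbf{r}},\underline{\mathbf{c}},\overline{\mathbf{c}})$ (first two of length $n_1$, last two of length $n_2$) is realizable if there is a bipartite graph $G=(U,V,E)$, $U=\{u_1,\dots,u_{n_1}\}$, $V=\{v_1,\dots,v_{n_2}\}$, with $\underline r_i\le d_G(u_i)\le\overline r_i$ and $\underline c_j\le d_G(v_j)\le\overline c_j$ for all $i,j$. $\Sigma_k\mathbf{x}=\sum_{i=1}^k x_i$. Phase Two: set $\mathbf{r}\leftarrow\underline{\mathbf{r}}$, $\delta_2\leftarrow\Sigma_{n_2}\mathbf{c}-\Sigma_{n_1}\underline{\mathbf{r}}$, $i\leftarrow n_1$; for $k=1,\dots,\delta_2$ (outer loop): while $r_i=\overline r_i$ set $i\leftarrow i-1$;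 let $j=\min\{\ell:r_\ell=r_i\}$; swap $\overline r_i$ and $\overline r_j$; set $r_j\leftarrow r_j+1$. Return $(\mathbf{r},\mathbf{c})$. *)

(* Defs.v *)
From mathcomp Require Import all_boot all_order all_algebra.
Set Implicit Arguments. Unset Strict Implicit. Unset Printing Implicit Defensive.
Import Order.TTheory GRing.Theory Num.Theory.
Local Open Scope ring_scope.

(* Vectors are sequences of integers, indexed from 0 (paper: from 1). *)

Definition degU (n1 n2 : nat) (E : {set 'I_n1 * 'I_n2}) (i : 'I_n1) : nat :=
  #|[set j : 'I_n2 | (i, j) \in E]|.
Definition degV (n1 n2 : nat) (E : {set 'I_n1 * 'I_n2}) (j : 'I_n2) : nat :=
  #|[set i : 'I_n1 | (i, j) \in E]|.

Definition realizable (n1 n2 : nat) (rl ru cl cu : seq int) : Prop :=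
  [/\ size rl = n1, size ru = n1, size cl = n2, size cu = n2 &
  exists E : {set 'I_n1 * 'I_n2},
    (forall i : 'I_n1, rl`_i <= (degU E i)%:Z <= ru`_i) /\
    (forall j : 'I_n2, cl`_j <= (degV E j)%:Z <= cu`_j)].

Definition nonincreasing (x : seq int) : Prop :=
  forall i j : nat, (i <= j)%N -> (j < size x)%N -> x`_j <= x`_i.

(* The inner "while r_i = rbar_i do i <- i-1" loop, started at index i:
   returns the largest i' <= i with r_i' <> rbar_i', or None if the loop
   would run past the first index. *)
Fixpoint scan (r rb : seq int) (i : nat) : option nat :=
  match i with
  | 0%N => if r`_0 != rb`_0 then Some 0%N else None
  | p.+1 => if r`_p.+1 != rb`_p.+1 then Some p.+1 else scan r rb p
  end.

Definition state := (seq int * seq int * nat)%type.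

Definition step (s : state) : option state :=
  let: (r, rb, i0) := s in
  match scan r rb i0 with
  | None => None
  | Some i =>
      let j := find (pred1 r`_i) r in
      let rb' := set_nth 0 (set_nth 0 rb i rb`_j) j rb`_i in
      let r' := set_nth 0 r j (r`_j + 1) in
      Some (r', rb', i)
  end.

(* State after exactly k iterations of the outer loop, starting from
   r = rl, rbar = ru, i = n1 (0-based: n1 - 1). *)
Fixpoint phase_two (rl ru : seq int) (k : nat) : option state :=
  match k with
  | 0%N => Some (rl, ru, (size rl).-1)
  | k'.+1 => obind step (phase_two rl ru k')
  end.

(* Main.v *)
Require Import Defs.
From mathcomp Require Import all_boot all_order all_algebra.
From mathcomp Require Import fingroup perm zify.
Import Order.TTheory GRing.Theory Num.Theory.
Local Open Scope ring_scope.

Lemma degU_sum n1 n2 (E : {set 'I_n1 * 'I_n2}) i :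
  degU E i = (\sum_(j < n2) ((i, j) \in E))%N.
Proof.
rewrite /degU -sum1dep_card big_mkcond /=; apply: eq_bigr => j _.
by case: ((i, j) \in E).
Qed.

Lemma degV_sum n1 n2 (E : {set 'I_n1 * 'I_n2}) j :
  degV E j = (\sum_(i < n1) ((i, j) \in E))%N.
Proof.
rewrite /degV -sum1dep_card big_mkcond /=; apply: eq_bigr => i _.
by case: ((i, j) \in E).
Qed.

Lemma double_count n1 n2 (E : {set 'I_n1 * 'I_n2}) :
  \sum_(i < n1) (degU E i)%:Z = \sum_(j < n2) (degV E j)%:Z.
Proof.
rewrite -!(big_morph Posz PoszD (erefl (Posz 0))); congr Posz.
under eq_bigr do rewrite degU_sum.
under [RHS]eq_bigr do rewrite degV_sum.
exact: exchange_big.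
Qed.

Lemma swap_graph n1 n2 (E : {set 'I_n1 * 'I_n2}) (a b : 'I_n1) :
  exists E' : {set 'I_n1 * 'I_n2},
    (forall i, degU E' i = degU E (tperm a b i)) /\
    (forall j, degV E' j = degV E j).
Proof.
exists [set p | (tperm a b p.1, p.2) \in E]; split.
  move=> i; rewrite /degU; apply: eq_card => j; by rewrite !inE.
move=> j; rewrite /degV.
rewrite -(card_preimset _ (@perm_inj _ (tperm a b))).
apply: eq_card => i; by rewrite !inE /= tpermK.
Qed.

Lemma transfer_graph n1 n2 (E : {set 'I_n1 * 'I_n2}) (a b : 'I_n1) :
  (degU E b < degU E a)%N ->
  exists E' : {set 'I_n1 * 'I_n2},
    [/\ degU E' a = (degU E a).-1, degU E' b = (degU E b).+1,
        (forall i, i != a -> i != b -> degU E' i = degU E i) &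
        (forall j, degV E' j = degV E j)].
Proof.
move=> lt.
have neq : a != b by apply/eqP => eab; move: lt; rewrite eab ltnn.
have [v /andP [va vb]] : exists v, ((a, v) \in E) && ((b, v) \notin E).
  apply/existsP; apply: contraLR lt; rewrite negb_exists => /forallP H.
  rewrite -leqNgt /degU; apply: subset_leq_card; apply/subsetP => j.
  rewrite !inE => Haj; move: (H j); by rewrite Haj /= negbK.
exists ((b, v) |: (E :\ (a, v))); split.
- rewrite /degU (@eq_card _ _ ([set j | (a, j) \in E] :\ v)); last first.
    move=> j; rewrite !inE !xpair_eqE eqxx (negbTE neq) /=.
    by case: (j == v).
  by rewrite [in RHS](cardsD1 v) inE va.
- rewrite /degU (@eq_card _ _ (v |: [set j | (b, j) \in E])); last first.
    move=> j; rewrite !inE !xpair_eqE eqxx [b == a]eq_sym (negbTE neq) /=.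
    by case: (j == v).
  by rewrite cardsU1 inE vb.
- move=> i ia ib; rewrite /degU; apply: eq_card => j.
  by rewrite !inE !xpair_eqE (negbTE ia) (negbTE ib).
- move=> j; rewrite /degV; case: (eqVneq j v) => [->|jv].
    rewrite (@eq_card _ _ (b |: ([set i | (i, v) \in E] :\ a))); last first.
      move=> i; rewrite !inE !xpair_eqE !eqxx !andbT.
      by case: (i == b).
    rewrite cardsU1 !inE negb_and negbK vb orbT add1n.
    by rewrite [in RHS](cardsD1 a) inE va.
  apply: eq_card => i; rewrite !inE !xpair_eqE (negbTE jv) !andbF /=.
  by [].
Qed.

Lemma scan_some r rb i0 i : scan r rb i0 = Some i ->
  [/\ (i <= i0)%N, r`_i != rb`_i & forall l, (i < l <= i0)%N -> r`_l = rb`_l].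
Proof.
elim: i0 => [|p IH] /=.
  case: ifP => // H [<-]; split => // l; by case/andP => /leq_trans H1 /H1.
case: ifP => H.
  case=> <-; split => // l; case/andP => H1 H2; exfalso; by move: (leq_trans H1 H2); rewrite ltnn.
move=> /IH [H1 H2 H3]; split => //; first exact: leqW.
move=> l /andP [Hl1 Hl2]; move: Hl2; rewrite leq_eqVlt => /orP [/eqP ->|Hl2].
  by move/negbFE: H => /eqP.
by apply: H3; rewrite Hl1.
Qed.

Lemma scan_none r rb i0 : scan r rb i0 = None ->
  forall l, (l <= i0)%N -> r`_l = rb`_l.
Proof.
elim: i0 => [|p IH] /=.
  case: ifP => // H _ l; rewrite leqn0 => /eqP ->; by move/negbFE: H => /eqP.
case: ifP => // H /IH H1 l; rewrite leq_eqVlt => /orP [/eqP ->|Hl].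
  by move/negbFE: H => /eqP.
exact: H1.
Qed.

Lemma sumseq (s : seq int) n : size s = n -> \sum_(x <- s) x = \sum_(l < n) s`_l.
Proof. by move=> <-; rewrite (big_nth 0) big_mkord. Qed.

Definition Inv n1 n2 (c r rb : seq int) (i0 : nat) : Prop :=
  [/\ realizable n1 n2 r rb c c, nonincreasing r &
      forall l, (i0 < l)%N -> r`_l = rb`_l].

Lemma sum_c n1 n2 (c : seq int) (E : {set 'I_n1 * 'I_n2}) :
  (forall j : 'I_n2, c`_j <= (degV E j)%:Z <= c`_j) ->
  \sum_(j < n2) c`_j = \sum_(l < n1) (degU E l)%:Z.
Proof.
move=> HV; rewrite double_count; apply: eq_bigr => j _.
by apply/eqP; rewrite eq_le; exact: HV j.
Qed.

Lemma step_ok n1 n2 (c r rb : seq int) i0 :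
  Inv n1 n2 c r rb i0 -> \sum_(l < n1) r`_l < \sum_(j < n2) c`_j ->
  exists r' rb' i, step (r, rb, i0) = Some (r', rb', i) /\
    Inv n1 n2 c r' rb' i /\ \sum_(l < n1) r'`_l = \sum_(l < n1) r`_l + 1.
Proof.
case => [[sr srb sc _ [E [HU HV]]] Hni Hp] Hlt.
have Hc := @sum_c _ _ _ _ HV.
have [l0 Hl0] : exists l : 'I_n1, r`_l != rb`_l.
  case: (pickP (fun l : 'I_n1 => r`_l != rb`_l)) => [l Hl | H]; first by exists l.
  exfalso; move: Hlt; rewrite Hc.
  rewrite [X in _ < X](eq_bigr (fun l : 'I_n1 => r`_l)) ?ltxx // => l _.
  move: (H l) (HU l) => /= /negbFE /eqP <-; by move=> /andP [H1 H2]; apply/eqP; rewrite eq_le H1 H2.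
have l0i0 : (l0 <= i0)%N.
  rewrite leqNgt; apply/negP => H; move: (Hp _ H) => E0; by rewrite E0 eqxx in Hl0.
case Hs: (scan r rb i0) => [i|]; last first.
  by move: (@scan_none _ _ _ Hs _ l0i0) => E0; rewrite E0 eqxx in Hl0.
move: (@scan_some _ _ _ _ Hs) => [ii0 Hri Habove].
have iltn : (i < n1)%N.
  rewrite ltnNge; apply/negP => H; move: Hri; by rewrite !nth_default ?sr ?srb.
have eqab : forall l, (i < l)%N -> r`_l = rb`_l.
  move=> l Hl; case: (leqP l i0) => H; first by apply: Habove; rewrite Hl H.
  exact: Hp.
set j := find (pred1 r`_i) r.
have hasr : has (pred1 r`_i) r.
  apply/hasP; exists r`_i; last by rewrite /= eqxx.
  by apply: mem_nth; rewrite sr.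
have rj : r`_j = r`_i by move: (nth_find 0 hasr) => /eqP.
have ji : (j <= i)%N.
  rewrite leqNgt; apply/negP => H; move: (before_find 0 H); by rewrite /= eqxx.
have bef : forall a, (a < j)%N -> r`_a != r`_i.
  by move=> a Ha; move: (before_find 0 Ha) => /= /negbT.
have jltn : (j < n1)%N := leq_ltn_trans ji iltn.
pose io := Ordinal iltn. pose jo := Ordinal jltn.
have rirb : r`_i < rb`_i.
  move: (HU io) => /= /andP [H1 H2]; rewrite lt_neqAle Hri /=; exact: le_trans H1 H2.
have [E1 [HU1 HV1 Hi1]] : exists E1 : {set 'I_n1 * 'I_n2},
    [/\ forall l : 'I_n1, r`_l <= (degU E1 l)%:Z <= rb`_l,
        forall j, degV E1 j = degV E j & r`_i < (degU E1 io)%:Z].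
  case: (boolP (r`_i < (degU E io)%:Z)) => Hd; first by exists E.
  have Hdi : (degU E io)%:Z = r`_i.
    move: (HU io) => /= /andP [H1 H2]; apply/eqP; rewrite eq_le H1 andbT; by rewrite leNgt.
  have [l Hl] : exists l : 'I_n1, r`_l < (degU E l)%:Z.
    case: (pickP (fun l : 'I_n1 => r`_l < (degU E l)%:Z)) => [l Hl | H]; first by exists l.
    exfalso; move: Hlt; rewrite Hc.
    rewrite [X in _ < X](eq_bigr (fun l : 'I_n1 => r`_l)) ?ltxx // => l _.
    move: (H l) (HU l) => /= /negbT; rewrite -leNgt => H1 /andP [H2 _].
    by apply/eqP; rewrite eq_le H1 H2.
  have li : (l < i)%N.
    rewrite ltn_neqAle; apply/andP; split.
      apply/eqP => eli; have eio : l = io by apply: val_inj.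
      by move: Hl; rewrite eio Hdi ltxx.
    rewrite leqNgt; apply/negP => H; move: (eqab _ H) (HU l) => E0 /andP [_ H2].
    by move: (lt_le_trans Hl H2); rewrite E0 ltxx.
  have Hril : r`_i <= r`_l by apply: Hni; [exact: ltnW | rewrite sr].
  have Hlt2 : (degU E io < degU E l)%N by rewrite -ltz_nat Hdi; exact: le_lt_trans Hril Hl.
  have [E' [Ha Hb Ho HV']] := @transfer_graph _ _ _ _ _ Hlt2.
  exists E'; split => //; last first.
    by rewrite Hb; move: Hdi rirb; lia.
  move=> x; case: (eqVneq x l) => [->|xl].
    rewrite Ha; move: (HU l) => /andP [H1 H2]; move: Hl H1 H2; lia.
  case: (eqVneq x io) => [->|xi].
    rewrite Hb /= -addn1 PoszD Hdi; move: rirb; set a := r`_i; set b := rb`_i; lia.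
  by rewrite Ho.
have [E2 [HU2 HV2]] := @swap_graph _ _ E1 io jo.
exists (set_nth 0 r j (r`_j + 1)), (set_nth 0 (set_nth 0 rb i rb`_j) j rb`_i), i.
rewrite /= Hs; split => //.
have sr' : size (set_nth 0 r j (r`_j + 1)) = n1.
  by rewrite size_set_nth sr; apply/maxn_idPr.
split; last first.
  rewrite (bigD1 jo) //= [in RHS](bigD1 jo) //= nth_set_nth /= eqxx.
  rewrite (eq_bigr (fun l : 'I_n1 => r`_l)); first by rewrite addrAC.
  move=> l Hl; rewrite nth_set_nth /=; case: eqP => // Hlj.
  by exfalso; move: Hl; rewrite (_ : l = jo) ?eqxx //; apply: val_inj.
split.
- split => //.
    by rewrite !size_set_nth srb !maxnA; apply/maxn_idPr; rewrite geq_max; apply/andP.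
  exists E2; split; last first.
    by move=> y; rewrite HV2 HV1; exact: HV.
  move=> x; rewrite HU2 !nth_set_nth /=.
  case: tpermP => [->|->|xi xj] /=.
  + case: (eqVneq i j) => [eij|nij].
      have eo : io = jo by apply: val_inj.
      rewrite -eo; move: (HU1 io) Hi1 => /= /andP [H1 H2]; rewrite -eij.
      move: H1 H2; set a := r`_i; set b := rb`_i; set d := (degU E1 io : int); lia.
    rewrite nth_set_nth /= eqxx; move: (HU1 jo) => /=; by rewrite rj.
  + rewrite !eqxx; move: (HU1 io) Hi1 => /= /andP [H1 H2]; rewrite rj.
    move: H1 H2; set a := r`_i; set b := rb`_i; set d := (degU E1 io : int); lia.
  + have xi' : (x : nat) != i by apply/eqP => H; apply: xi; apply: val_inj.
    have xj' : (x : nat) != j by apply/eqP => H; apply: xj; apply: val_inj.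
    rewrite (negbTE xj') nth_set_nth /= (negbTE xi'); exact: HU1.
- move=> a b ab; rewrite sr' => bn; rewrite !nth_set_nth /=.
  have an : (a < n1)%N := leq_ltn_trans ab bn.
  case: (eqVneq b j) => [eb|nb]; case: (eqVneq a j) => [ea|na].
  + by [].
  + have aj : (a < j)%N by rewrite ltn_neqAle na -eb ab.
    have jsz : (j < size r)%N by rewrite sr.
    move: (bef _ aj) (Hni a j (ltnW aj) jsz); rewrite rj.
    set x := r`_a; set y := r`_i; lia.
  + have jb : (j <= b)%N by rewrite -ea.
    have bsz : (b < size r)%N by rewrite sr.
    move: (Hni j b jb bsz); set x := r`_b; set y := r`_j; lia.
  + by apply: Hni; rewrite ?sr.
- move=> l Hl; rewrite !nth_set_nth /=.
  have lj : (l != j) by apply/eqP => H; move: (leq_ltn_trans ji Hl); rewrite H ltnn.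
  have li : (l != i) by apply/eqP => H; move: Hl; rewrite H ltnn.
  rewrite (negbTE lj) nth_set_nth /= (negbTE li); exact: eqab.
Qed.

Lemma final_iff n1 n2 (c r rb : seq int) i0 :
  Inv n1 n2 c r rb i0 ->
  (realizable n1 n2 r r c c <-> \sum_(l < n1) r`_l = \sum_(j < n2) c`_j).
Proof.
case => [[sr srb sc _ [E [HU HV]]] Hni Hp]; split.
  case => _ _ _ _ [E' [HU' HV']].
  rewrite (@sum_c _ _ _ _ HV'); apply: eq_bigr => l _.
  by apply/eqP; rewrite eq_le; exact: HU' l.
move=> Hs; split => //; exists E; split => // l.
have Hd : forall l : 'I_n1, true -> (degU E l)%:Z - r`_l = 0.
  apply: (@psumr_eq0P _ _ predT (fun l : 'I_n1 => (degU E l)%:Z - r`_l)).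
    by move=> x _; rewrite subr_ge0; case/andP: (HU x).
  by rewrite sumrB -(@sum_c _ _ _ _ HV) Hs subrr.
move: (Hd l isT) => /eqP; rewrite subr_eq0 => /eqP ->.
by rewrite lexx.
Qed.

Theorem lemma3 (n1 n2 : nat) (rl ru c : seq int) :
  realizable n1 n2 rl ru c c ->
  nonincreasing rl -> nonincreasing c ->
  (forall i : nat, (i < n1)%N -> rl`_i <= ru`_i) ->
  forall k : nat,
    k%:Z <= \sum_(x <- c) x - \sum_(x <- rl) x ->
    exists r rb i,
      phase_two rl ru k = Some (r, rb, i) /\
      (realizable n1 n2 r r c c <-> k%:Z = \sum_(x <- c) x - \sum_(x <- rl) x).
Proof.
move=> Hreal Hnl Hnc Hle k.
have [sl su sc _ _] := Hreal.
rewrite (@sumseq _ _ sc) (@sumseq _ _ sl).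
set S := \sum_(j < n2) c`_j; set L := \sum_(l < n1) rl`_l.
suff H : forall k : nat, k%:Z <= S - L -> exists r rb i,
      phase_two rl ru k = Some (r, rb, i) /\ Inv n1 n2 c r rb i /\
      \sum_(l < n1) r`_l = L + k%:Z.
  move=> Hk; have [r [rb [i [Hpt [Hinv Hsum]]]]] := H k Hk.
  exists r, rb, i; split => //.
  rewrite (@final_iff _ _ _ _ _ _ Hinv) Hsum.
  split => H0; lia.
elim => [|k' IH] Hk.
  exists rl, ru, (size rl).-1; split => //; split; last by rewrite addr0.
  split => // l Hl.
  rewrite !nth_default // ?su ?sl -?sl //; move: Hl; case: (size rl) => //= n Hn; by rewrite -?su -?sl.
have Hk' : k'%:Z <= S - L by apply: le_trans Hk; rewrite lez_nat.
have [r [rb [i [Hpt [Hinv Hsum]]]]] := IH Hk'.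
have Hlt : \sum_(l < n1) r`_l < S.
  rewrite Hsum; move: Hk; lia.
have [r' [rb' [i' [Hst [Hinv' Hsum']]]]] := @step_ok _ _ _ _ _ _ Hinv Hlt.
exists r', rb', i'; split; first by rewrite /= Hpt.
split => //; rewrite Hsum' Hsum; lia.
Qed.
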